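(* Let $P_1,\dots,P_N$ be orthogonal projections on a finite-dimensional complex Hilbert space, and let $\delta\in[0,1]$, $\alpha\in[0,1]$. Suppose that for at least $\delta N^2$ of the ordered pairs $(j,\ell)\in[N]^2$ one has $\|P_jP_\ell\|_{\mathrm{op}}\le\alpha$. Then \[ \left\|\frac1N\sum_{j=1}^NP_j\right\|_{\mathrm{op}}\le1-\frac\delta2(1-\alpha). \]
   Context: $\|\cdot\|_{\mathrm{op}}$ denotes the operator norm; ordered pairs in $[N]^2$ include the diagonal pairs $(j,j)$. *)

(* Defs.v *)
From HB Require Import structures.
From mathcomp Require Import all_boot all_order all_algebra.
From mathcomp Require Import all_classical all_reals.
From mathcomp Require Import complex.
Set Implicit Arguments. Unset Strict Implicit. Unset Printing Implicit Defensive.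
Import Order.TTheory GRing.Theory Num.Theory.
Local Open Scope ring_scope.
Local Open Scope classical_set_scope.

(* The finite-dimensional complex Hilbert space is C^n = 'cV[R[i]]_n with the
   standard inner product <x,y> = \sum_i conj(x_i) y_i. *)

Definition vnorm (R : realType) (n : nat) (x : 'cV[R[i]]_n) : R :=
  Num.sqrt (\sum_(i < n) (Normc.normc (x i ord0)) ^+ 2).

Definition opnorm (R : realType) (n : nat) (A : 'M[R[i]]_n) : R :=
  sup [set r : R | exists x : 'cV[R[i]]_n, vnorm x <= 1 /\ r = vnorm (A *m x)].

Definition adjoint (R : realType) (n : nat) (A : 'M[R[i]]_n) : 'M[R[i]]_n :=
  map_mx (@conjc R) A^T.

Definition orth_proj (R : realType) (n : nat) (P : 'M[R[i]]_n) : Prop :=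
  P *m P = P /\ adjoint P = P.

(* Main.v *)
Require Import Defs.
From HB Require Import structures.
From mathcomp Require Import all_boot all_order all_algebra.
From mathcomp Require Import all_classical all_reals.
From mathcomp Require Import complex.
From mathcomp Require Import ring lra.
Import Order.TTheory GRing.Theory Num.Theory.
Local Open Scope ring_scope.
Definition rip (R : realType) (n : nat) (u v : 'cV[R[i]]_n) : R :=
  \sum_(i < n) (complex.Re (u i ord0) * complex.Re (v i ord0) + complex.Im (u i ord0) * complex.Im (v i ord0)).

Definition cip (R : realType) (n : nat) (u v : 'cV[R[i]]_n) : R[i] :=
  \sum_(i < n) (conjc (u i ord0) * v i ord0).

Arguments rip {R n}.
Arguments cip {R n}.

Lemma Re_sum {R : realType} (I : Type) (r : seq I) (F : I -> R[i]) :
  complex.Re (\sum_(i <- r) F i) = \sum_(i <- r) complex.Re (F i).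
Proof.
elim: r => [|x r IH]; rewrite ?big_nil ?big_cons //= -IH.
by case: (F x) => a b; case: (\sum_(i <- r) F i) => c d.
Qed.

Lemma rip_cip {R : realType} {n : nat} (u v : 'cV[R[i]]_n) : rip u v = complex.Re (cip u v).
Proof.
rewrite /rip /cip Re_sum; apply: eq_bigr => i _.
case: (u i ord0) => a b; case: (v i ord0) => c d /=.
by rewrite mulNr opprK.
Qed.

Lemma ripC {R : realType} {n : nat} (u v : 'cV[R[i]]_n) : rip u v = rip v u.
Proof. by apply: eq_bigr => i _; rewrite mulrC [complex.Im _ * _]mulrC. Qed.

Lemma vnormE {R : realType} {n : nat} (u : 'cV[R[i]]_n) : vnorm u = Num.sqrt (rip u u).
Proof.
rewrite /vnorm /rip; congr Num.sqrt; apply: eq_bigr => i _.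
case: (u i ord0) => a b /=.
by rewrite sqr_sqrtr ?addr_ge0 ?sqr_ge0 // !expr2.
Qed.

Lemma rip_ge0 {R : realType} {n : nat} (u : 'cV[R[i]]_n) : 0 <= rip u u.
Proof. by apply: sumr_ge0 => i _; rewrite -!expr2 addr_ge0 ?sqr_ge0. Qed.

Lemma rip_bound {R : realType} {n : nat} (u v : 'cV[R[i]]_n) (s : R) :
  2 * s * rip u v <= s ^+ 2 * rip u u + rip v v.
Proof.
rewrite /rip !mulr_sumr -big_split /=; apply: ler_sum => i _.
set a := complex.Re _; set b := complex.Im _; set c := complex.Re _; set d := complex.Im _.
have := sqr_ge0 (s * a - c); have := sqr_ge0 (s * b - d); nra.
Qed.

Lemma rip_le {R : realType} {n : nat} (u v : 'cV[R[i]]_n) (a : R) :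
  0 <= a -> rip u u <= 1 -> rip v v <= a ^+ 2 -> rip u v <= a.
Proof.
move=> a0 hu hv.
have [ap|] := ltP 0 a.
  have := rip_bound u v a. nra.
move=> ale; have a00 : a = 0 by apply/eqP; rewrite eq_le ale a0.
subst a.
have := rip_ge0 u; have := rip_ge0 v.
have := rip_bound u v (rip u v).
set t := rip u v. rewrite expr2 mulr0 in hv. nra.
Qed.
Lemma cip_adj {R : realType} {n : nat} (A : 'M[R[i]]_n) (u v : 'cV[R[i]]_n) :
  cip (A *m u) v = cip u (adjoint A *m v).
Proof.
rewrite /cip /adjoint.
under eq_bigr => i _ do rewrite mxE rmorph_sum mulr_suml.
rewrite exchange_big /=; apply: eq_bigr => k _.
rewrite mxE mulr_sumr; apply: eq_bigr => i _.
rewrite !mxE rmorphM /=; ring.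
Qed.

Lemma cip_suml {R : realType} {n : nat} (I : Type) (r : seq I) (F : I -> 'cV[R[i]]_n) v :
  cip (\sum_(j <- r) F j) v = \sum_(j <- r) cip (F j) v.
Proof.
rewrite /cip.
under eq_bigr => i _ do rewrite summxE rmorph_sum mulr_suml.
by rewrite exchange_big.
Qed.

Lemma rip_suml {R : realType} {n : nat} (I : Type) (r : seq I) (F : I -> 'cV[R[i]]_n) v :
  rip (\sum_(j <- r) F j) v = \sum_(j <- r) rip (F j) v.
Proof.
rewrite rip_cip cip_suml Re_sum; apply: eq_bigr => j _; by rewrite rip_cip.
Qed.

Lemma rip_sumr {R : realType} {n : nat} (I : Type) (r : seq I) (F : I -> 'cV[R[i]]_n) v :
  rip v (\sum_(j <- r) F j) = \sum_(j <- r) rip v (F j).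
Proof.
rewrite ripC rip_suml; apply: eq_bigr => j _; by rewrite ripC.
Qed.

Lemma rip_proj {R : realType} {n : nat} (P Q : 'M[R[i]]_n) (x : 'cV[R[i]]_n) :
  orth_proj P -> rip (P *m x) (Q *m x) = rip x ((P *m Q) *m x).
Proof.
case=> _ hP; rewrite !rip_cip cip_adj hP mulmxA //.
Qed.

Lemma rip_proj_le {R : realType} {n : nat} (P : 'M[R[i]]_n) (x : 'cV[R[i]]_n) :
  orth_proj P -> rip x x <= 1 -> rip (P *m x) (P *m x) <= 1.
Proof.
move=> hP hx.
have e : rip (P *m x) (P *m x) = rip x (P *m x).
  by rewrite rip_proj // (proj1 hP).
have := rip_bound x (P *m x) 1.
rewrite e; lra.
Qed.

Lemma rip_scale {R : realType} {n : nat} (c : R) (u : 'cV[R[i]]_n) :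
  rip ((c%:C)%C *: u) ((c%:C)%C *: u) = c ^+ 2 * rip u u.
Proof.
rewrite /rip mulr_sumr; apply: eq_bigr => i _.
rewrite !mxE; case: (u i ord0) => a b /=; ring.
Qed.
Lemma rip00 {R : realType} {n : nat} : rip (0 : 'cV[R[i]]_n) 0 = 0.
Proof. by rewrite /rip big1 // => i _; rewrite mxE /= mulr0 addr0. Qed.

Lemma sqrt_le_sq {R : realType} (a c : R) : 0 <= c -> Num.sqrt a <= c -> a <= c ^+ 2.
Proof.
move=> c0; rewrite -[X in _ <= X -> _]ger0_norm // -sqrtr_sqr ler_sqrt //.
exact: sqr_ge0.
Qed.

Theorem lemma4p13 (R : realType) (n N : nat) (P : 'I_N -> 'M[R[i]]_n)
    (delta alpha : R) :
  (forall j, orth_proj (P j)) ->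
  0 <= delta <= 1 -> 0 <= alpha <= 1 ->
  delta * (N%:R ^+ 2) <=
    #|[set jl : 'I_N * 'I_N | opnorm (P jl.1 *m P jl.2) <= alpha]|%:R ->
  opnorm (N%:R^-1 *: \sum_(j < N) P j) <= 1 - delta / 2 * (1 - alpha).
Proof.
move=> hP /andP[d0 d1] /andP[a0 a1].
set G := [set jl : 'I_N * 'I_N | _].
move=> hcard.
set b := 1 - _.
have hb : 0 <= b by rewrite /b; nra.
rewrite /opnorm; apply: ge_sup.
  exists 0, 0; split; last by rewrite mulmx0 vnormE rip00 sqrtr0.
  by rewrite vnormE rip00 sqrtr0.
move=> r [x [hx ->]].
have hq : rip x x <= 1 by move: hx; rewrite vnormE => /sqrt_le_sq; rewrite expr1n; apply.
set u := fun j => P j *m x.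
have key : rip (\sum_j u j) (\sum_j u j) <= N%:R ^+ 2 - (1 - alpha) * #|G|%:R.
  rewrite rip_suml; under eq_bigr do rewrite rip_sumr.
  rewrite pair_bigA /=.
  apply: (@le_trans _ _ (\sum_(p : 'I_N * 'I_N) (if p \in G then alpha else 1))).
    apply: ler_sum => p _; case: ifP => hG.
      rewrite /u rip_proj //; apply: rip_le => //.
      have hM : vnorm ((P p.1 *m P p.2) *m x) <= opnorm (P p.1 *m P p.2).
        rewrite /opnorm; apply: ub_le_sup; last by exists x.
        exists 1 => s [y [hy ->]].
        move: hy; rewrite !vnormE => /sqrt_le_sq; rewrite expr1n => /(_ ler01) hy.
        rewrite -sqrtr1 ler_sqrt //.
        by rewrite -mulmxA; apply: rip_proj_le => //; apply: rip_proj_le.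
      move: hG; rewrite inE => hG.
      have := le_trans hM hG.
      by rewrite vnormE => /sqrt_le_sq; apply.
    by apply: rip_le; rewrite ?expr1n // /u; apply: rip_proj_le.
  have -> : \sum_(p : 'I_N * 'I_N) (if p \in G then alpha else 1) =
      \sum_(p : 'I_N * 'I_N) 1 - \sum_(p : 'I_N * 'I_N) (if p \in G then 1 - alpha else 0).
    by rewrite -sumrB; apply: eq_bigr => p _; case: ifP => _; ring.
  rewrite -big_mkcond /= !sumr_const card_prod card_ord natrM expr2 mulr_natr.
  by rewrite mulr_natr.
have ceq : (N%:R^-1 : R[i]) = ((N%:R^-1 : R)%:C)%C by rewrite fmorphV rmorph_nat.
rewrite -scalemxAl mulmx_suml ceq vnormE rip_scale.
rewrite -[b]ger0_norm // -sqrtr_sqr ler_sqrt ?sqr_ge0 //.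
set S := rip _ _ in key *.
have S0 : 0 <= S by apply: rip_ge0.
case: (posnP N) => [N0|Npos].
  by rewrite N0 invr0 expr0n /= mul0r sqr_ge0.
set k := (N%:R : R).
have hk : 0 < k by rewrite /k ltr0n.
set g := (#|G|%:R : R) in hcard key.
set w := k^-1.
have w0 : 0 <= w ^+ 2 by apply: sqr_ge0.
have h3 : w ^+ 2 * k ^+ 2 = 1 by rewrite -exprMn mulVf ?expr1n // gt_eqF.
have h1 : w ^+ 2 * S <= w ^+ 2 * (k ^+ 2 - (1 - alpha) * g) by apply: ler_wpM2l.
have h2 : w ^+ 2 * ((1 - alpha) * (delta * k ^+ 2)) <= w ^+ 2 * ((1 - alpha) * g).
  by apply: ler_wpM2l => //; apply: ler_wpM2l; rewrite // subr_ge0.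
have e : w ^+ 2 * ((1 - alpha) * (delta * k ^+ 2)) = (1 - alpha) * delta.
  by transitivity ((1 - alpha) * delta * (w ^+ 2 * k ^+ 2)); [ring | rewrite h3 mulr1].
have eb : b ^+ 2 = 1 - (1 - alpha) * delta + (delta / 2 * (1 - alpha)) ^+ 2.
  by rewrite /b; field.
have := sqr_ge0 (delta / 2 * (1 - alpha)).
rewrite eb; rewrite mulrBr h3 in h1; rewrite e in h2.
lra.
Qed.
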